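(* Let $n\ge 2$ and let $f(x)=\sum_{i=0}^n a_i x^i$ be a polynomial with complex coefficients and $a_n\neq 0$. Write $f(x)=a_n(x+x_1)(x+x_2)\cdots(x+x_n)$ with $x_1,\dots,x_n\in\mathbb{C}$, taken in any order. Define the characteristic roots $b_1,\dots,b_{n-1}$ by the relations $x_i=x_{i-1}+\sum_{j=1}^{i-1}b_j$ for $i=2,\dots,n$. Let $B_n=(b_1,\dots,b_{n-1})^T$, and let $H_n=(h_{ij})_{1\le i,j\le n-1}$ be the symmetric matrix whose entries for $i\ge j$ are $$h_{ij}=\frac{1}{6}\Big(ni^3-\tfrac{3}{2}n(n+1)i^2+\tfrac{1}{2}n(3n+1)i+\tfrac{1}{2}(n^4-n^2)\Big)-\frac{1}{4}\big(i^2-(2n+1)i+n(n+1)\big)(j-1)j,$$ and $h_{ij}=h_{ji}$ for $i<j$. Then the characteristic discriminant $D_n=(n-1)!^2a_{n-1}^2-2\,n!\,(n-2)!\,a_na_{n-2}$ satisfies $$D_n=(n-1)!\,(n-2)!\,a_n^2\,B_n^TH_nB_n,$$ equivalently $B_n^TH_nB_n=\dfrac{1}{a_n^2}\big((n-1)a_{n-1}^2-2na_na_{n-2}\big)$. In particular, $H_n$ has constant positive integer entries depending only on $n$.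
   Context: The numbers $-x_1,\dots,-x_n$ are the roots of $f$ listed with multiplicity. The defining relations are equivalent to $b_1=x_2-x_1$ and $b_j=x_{j+1}-2x_j+x_{j-1}$ for $2\le j\le n-1$. For $n=2$ the matrix $H_2=[1]$. *)

(* Defs.v *)
From HB Require Import structures.
From mathcomp Require Import all_boot all_order all_algebra.
From mathcomp Require Import complex.
From mathcomp Require Import reals.
Set Implicit Arguments. Unset Strict Implicit. Unset Printing Implicit Defensive.
Import Order.TTheory GRing.Theory Num.Theory.
Local Open Scope ring_scope.

(* Entry h_{ij} of H_n for 1-based indices i >= j, as a rational number. *)
Definition h_low (n i j : nat) : rat :=
  let N := n%:R : rat in let I := i%:R : rat in let J := j%:R : rat in
  (1/6) * (N * I ^+ 3 - (3/2) * N * (N + 1) * I ^+ 2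
           + (1/2) * N * (3 * N + 1) * I + (1/2) * (N ^+ 4 - N ^+ 2))
  - (1/4) * (I ^+ 2 - (2 * N + 1) * I + N * (N + 1)) * (J - 1) * J.

Definition h_entry (n i j : nat) : rat :=
  if (j <= i)%N then h_low n i j else h_low n j i.

Definition Hmx (n : nat) : 'M[rat]_(n.-1) :=
  \matrix_(i < n.-1, j < n.-1) h_entry n i.+1 j.+1.

Definition Bvec (C : Type) (n : nat) (b : nat -> C) : 'cV[C]_(n.-1) :=
  \col_(i < n.-1) b i.+1.

(* Main.v *)
Require Import Defs.
From HB Require Import structures.
From mathcomp Require Import all_boot all_order all_algebra.
From mathcomp Require Import complex.
From mathcomp Require Import reals.
From mathcomp Require Import ring lra zify.
Import Order.TTheory GRing.Theory Num.Theory.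
Local Open Scope ring_scope.

Lemma sum0_below (F : nat -> nat) (i : nat) :
  (forall k, (k < i)%N -> F k = 0%N) ->
  \sum_(0 <= k < i) ((F k)%:R : rat) = 0.
Proof.
move=> H; rewrite big_nat big1 // => k /andP[_ hk]; by rewrite H.
Qed.

Lemma sum1 (i N : nat) :
  \sum_(0 <= k < i + N) (((k - i)%N)%:R : rat) = N%:R * (N%:R - 1) / 2.
Proof.
elim: N => [|N IH].
  rewrite addn0 big_nat big1 ?mul0r ?mulr0 // => k /andP[_ hk].
  by move/ltnW: hk; rewrite -subn_eq0 => /eqP ->.
rewrite addnS big_nat_recr //= IH addKn.
rewrite -natr1; by field.
Qed.

Lemma sum2 (j d N : nat) :
  \sum_(0 <= k < j + d + N) ((((k - (j + d)) * (k - j))%N)%:R : rat)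
  = N%:R * (N%:R - 1) * (2 * N%:R - 1) / 6 + d%:R * N%:R * (N%:R - 1) / 2.
Proof.
elim: N => [|N IH].
  rewrite addn0 big_nat big1 ?mul0r ?mulr0 ?addr0 // => k /andP[_ hk].
  by move/ltnW: hk; rewrite -subn_eq0 => /eqP ->.
rewrite addnS big_nat_recr //= IH addKn -addnA addKn natrM natrD.
rewrite -natr1; by field.
Qed.

Definition Gr (R : comPzRingType) (n i j : nat) : R :=
  n%:R * \sum_(0 <= k < n) (((k - i) * (k - j))%N%:R)
  - (\sum_(0 <= k < n) ((k - i)%N%:R)) * (\sum_(0 <= k < n) ((k - j)%N%:R)).

Lemma Gr_sym (R : comPzRingType) n i j : Gr R n i j = Gr R n j i.
Proof.
rewrite /Gr [X in _ - X]mulrC; congr (_ - _); congr (_ * _); apply: eq_bigr => k _; by rewrite mulnC.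
Qed.

Lemma Gr_h n i j : (j <= i)%N -> (i < n.-1)%N -> Gr rat n i j = h_low n i.+1 j.+1.
Proof.
move=> hji hin.
have [d hd] : exists d, i = (j + d)%N by exists (i - j)%N; lia.
have [N hN] : exists N, n = (j + d + N)%N.
  by exists (n - (j + d))%N; move: hin; rewrite hd -subn1; lia.
subst i n.
rewrite /Gr.
rewrite sum2 sum1.
have -> : (j + d + N = j + (d + N))%N by rewrite addnA.
rewrite sum1 /h_low !natrD -!natr1.
by field.
Qed.

Section PolyCoef.
Variable F : comNzRingType.
Variable y : nat -> F.
Definition Pm (m : nat) : {poly F} := \prod_(k < m) ('X + (y k)%:P).

Lemma Pm_S m : Pm m.+1 = Pm m * ('X + (y m)%:P).
Proof. by rewrite /Pm big_ord_recr. Qed.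

Lemma Pm_coefS m j : (Pm m.+1)`_j.+1 = (Pm m)`_j + y m * (Pm m)`_j.+1.
Proof. by rewrite Pm_S mulrDr coefD coefMX coefMC mulrC. Qed.

Lemma Pm_coef0 m : (Pm m.+1)`_0 = y m * (Pm m)`_0.
Proof. by rewrite Pm_S mulrDr coefD coefMX coefMC mulrC add0r. Qed.

Lemma Pm_top m : (Pm m)`_m = 1 /\ forall k, (Pm m)`_(m + k.+1) = 0.
Proof.
elim: m => [|m [IH1 IH2]].
  by rewrite /Pm big_ord0 coefC; split => // k; rewrite coefC.
have H0 := IH2 0; rewrite addn1 in H0.
split; first by rewrite Pm_coefS IH1 H0 mulr0 addr0.
move=> k; rewrite addSn Pm_coefS -addnS !IH2; by rewrite mulr0 addr0.
Qed.

Lemma Pm_e1 m : (Pm m.+1)`_m = \sum_(k < m.+1) y k.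
Proof.
elim: m => [|m IH].
  by rewrite Pm_coef0 big_ord1 /Pm big_ord0 coefC mulr1.
by rewrite Pm_coefS IH (proj1 (Pm_top _)) mulr1 [in RHS]big_ord_recr.
Qed.

Lemma Pm_e2 m : 2 * (Pm m.+2)`_m =
  (\sum_(k < m.+2) y k) ^+ 2 - \sum_(k < m.+2) y k ^+ 2.
Proof.
elim: m => [|m IH].
  rewrite Pm_coef0 Pm_coef0 /Pm big_ord0 coefC /=.
  rewrite !big_ord_recr !big_ord0 /=; ring.
rewrite Pm_coefS mulrDr IH Pm_e1 [in RHS]big_ord_recr [in RHS](big_ord_recr m.+2) /=.
ring.
Qed.
End PolyCoef.

Lemma quad (F : comNzRingType) (n : nat) (b : nat -> F) :
  \sum_(j < n.-1) (\sum_(i < n.-1) b i.+1 * Gr F n i j) * b j.+1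
  = n%:R * \sum_(k < n) (\sum_(i < n.-1) ((k - i)%N%:R : F) * b i.+1) ^+ 2
    - (\sum_(k < n) \sum_(i < n.-1) ((k - i)%N%:R : F) * b i.+1) ^+ 2.
Proof.
set c := fun k i : nat => ((k - i)%N%:R : F).
have E1 : \sum_(k < n) (\sum_(i < n.-1) c k i * b i.+1) ^+ 2
   = \sum_(j < n.-1) \sum_(i < n.-1) b i.+1 * b j.+1 * \sum_(k < n) (((k - i) * (k - j))%N%:R : F).
  under eq_bigr => k _ do rewrite expr2 big_distrlr /=.
  rewrite exchange_big /=.
  under eq_bigr => i _ do rewrite exchange_big /=.
  rewrite exchange_big /=.
  apply: eq_bigr => j _; apply: eq_bigr => i _; rewrite mulr_sumr.
  by apply: eq_bigr => k _; rewrite natrM /c; ring.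
have E2 : \sum_(k < n) \sum_(i < n.-1) c k i * b i.+1
   = \sum_(i < n.-1) b i.+1 * \sum_(k < n) c k i.
  rewrite exchange_big /=; apply: eq_bigr => i _; rewrite mulr_sumr.
  by apply: eq_bigr => k _; ring.
rewrite E1 E2 expr2 big_distrlr /= [X in _ - X]exchange_big /= mulr_sumr -sumrB.
apply: eq_bigr => j _; rewrite mulr_suml mulr_sumr -sumrB.
apply: eq_bigr => i _; rewrite /Gr !big_mkord /c; ring.
Qed.

Lemma transl (F : comNzRingType) (n : nat) (c : F) (z : nat -> F) :
  n%:R * \sum_(k < n) (c + z k) ^+ 2 - (\sum_(k < n) (c + z k)) ^+ 2
  = n%:R * \sum_(k < n) z k ^+ 2 - (\sum_(k < n) z k) ^+ 2.
Proof.
have -> : \sum_(k < n) (c + z k) ^+ 2 = \sum_(k < n) (c ^+ 2 + 2 * c * z k + z k ^+ 2).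
  by apply: eq_bigr => k _; ring.
rewrite !big_split /= -[\sum_(i < n) 2 * c * z i]mulr_sumr !sumr_const card_ord.
rewrite -[c ^+ 2 *+ n]mulr_natr -[c *+ n]mulr_natr.
ring.
Qed.


Lemma zrel (F : comNzRingType) (n : nat) (x b : nat -> F)
  (hb : forall k, (2 <= k <= n)%N -> x k = x k.-1 + \sum_(1 <= j < k) b j) :
  forall k, (k < n)%N ->
  x k.+1 = x 1%N + \sum_(i < n.-1) ((k - i)%N%:R : F) * b i.+1.
Proof.
elim=> [|k IH] hk.
  by rewrite big1 ?addr0 // => i _; rewrite sub0n mul0r.
rewrite hb; last by apply/andP; split.
rewrite /= IH; last by apply: ltnW.
rewrite -addrA; congr (_ + _).
have hk' : (k.+1 <= n.-1)%N by rewrite -ltnS prednK //; apply: leq_ltn_trans hk.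
have -> : \sum_(i < n.-1) ((k.+1 - i)%N%:R : F) * b i.+1
   = \sum_(i < n.-1) (((k - i)%N%:R : F) * b i.+1 + ((i <= k)%N%:R : F) * b i.+1).
  apply: eq_bigr => i _; rewrite -mulrDl; congr (_ * _).
  case: (leqP i k) => hik.
    by rewrite subSn // -natr1.
  have -> : (k.+1 - i = 0)%N by apply/eqP; rewrite subn_eq0.
  have -> : (k - i = 0)%N by apply/eqP; rewrite subn_eq0 ltnW.
  by rewrite addr0.
rewrite big_split /=; congr (_ + _).
rewrite -(big_mkord xpredT (fun i => ((i <= k)%N%:R : F) * b i.+1)).
rewrite (@big_cat_nat _ _ _ k.+1 0 n.-1) //=.
have -> : \sum_(k.+1 <= i < n.-1) ((i <= k)%N%:R : F) * b i.+1 = 0.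
  by rewrite big_nat big1 // => i /andP[hi _]; rewrite leqNgt hi mul0r.
rewrite addr0 big_add1 /= big_nat [RHS]big_nat; apply: eq_bigr => i /andP[_ hi].
by rewrite -ltnS hi mul1r.
Qed.

Lemma hentry_Gr n (i j : 'I_n.-1) : h_entry n i.+1 j.+1 = Gr rat n i j.
Proof.
rewrite /h_entry.
case: (leqP j.+1 i.+1) => h.
  by rewrite Gr_h.
by rewrite Gr_sym Gr_h // ltnW.
Qed.

Lemma Hmx_Gr n (i j : 'I_n.-1) : Hmx n i j = Gr rat n i j.
Proof. by rewrite /Hmx mxE hentry_Gr. Qed.

Lemma ratr_Gr (F : numFieldType) n i j : ratr (Gr rat n i j) = Gr F n i j.
Proof.
rewrite /Gr rmorphB !rmorphM !rmorph_sum rmorph_nat.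
by congr (_ * _ - _ * _); apply: eq_bigr => k _; rewrite rmorph_nat.
Qed.

Lemma sum_diff (F : comNzRingType) (W V : nat -> F) (a c : F) n :
  \sum_(0 <= k < n) (a - W k) * (c - V k)
  = n%:R * a * c - a * \sum_(0 <= k < n) V k - c * \sum_(0 <= k < n) W k
    + \sum_(0 <= k < n) W k * V k.
Proof.
elim: n => [|n IH]; first by rewrite !big_geq // mulr0n !mul0r !mulr0 !subr0 addr0.
rewrite !big_nat_recr //= IH -natr1; ring.
Qed.

Lemma lagr (w v : nat -> nat) n
  (hw : forall k l, (k <= l)%N -> (w k <= w l)%N)
  (hv : forall k l, (k <= l)%N -> (v k <= v l)%N) :
  (n%:R * \sum_(0 <= k < n) ((w k * v k)%N%:R)
    - (\sum_(0 <= k < n) (w k)%:R) * (\sum_(0 <= k < n) (v k)%:R) : rat)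
  = (\sum_(0 <= l < n) \sum_(0 <= k < l) ((w l - w k) * (v l - v k)))%N%:R.
Proof.
elim: n => [|n IH]; first by rewrite !big_geq // mul0r mulr0 subr0.
rewrite [in RHS]big_nat_recr //= natrD -IH natr_sum.
have -> : \sum_(0 <= k < n) (((w n - w k) * (v n - v k))%N%:R : rat)
   = \sum_(0 <= k < n) ((w n)%:R - (w k)%:R) * ((v n)%:R - (v k)%:R).
  rewrite !big_nat; apply: eq_bigr => k /andP[_ hk].
  by rewrite natrM !natrB // ?hw ?hv // ltnW.
rewrite sum_diff !big_nat_recr //= -natr1.
have -> : \sum_(0 <= k < n) ((w k)%:R * (v k)%:R : rat) = \sum_(0 <= k < n) ((w k * v k)%N%:R).
  by apply: eq_bigr => k _; rewrite natrM.
rewrite natrM; ring.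
Qed.

Theorem mainTheorem1 (R : realType) (n : nat) (hn : (2 <= n)%N)
    (f : {poly R[i]}) (hf : size f = n.+1)
    (x : nat -> R[i]) (b : nat -> R[i])
    (hfact : f = f`_n *: \prod_(1 <= k < n.+1) ('X + (x k)%:P))
    (hb : forall k, (2 <= k <= n)%N -> x k = x k.-1 + \sum_(1 <= j < k) b j) :
  let D := ((n.-1)`!)%:R ^+ 2 * f`_n.-1 ^+ 2
           - 2 * (n`!)%:R * ((n.-2)`!)%:R * f`_n * f`_n.-2 in
  (D%:M : 'M[R[i]]_1)
    = ((n.-1)`!)%:R * ((n.-2)`!)%:R * f`_n ^+ 2
        *: ((Bvec n b)^T *m map_mx (fun q : rat => ratr q) (Hmx n) *m Bvec n b)
  /\ (forall i j : 'I_n.-1, exists k : nat, (0 < k)%N /\ Hmx n i j = k%:R).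
Proof.
move=> D; rewrite /D {D}.
case: n hn hf hfact hb => [|[|m]] // _ hf hfact hb /=.
split.
  have E : ((Bvec m.+2 b)^T *m map_mx (fun q : rat => ratr q) (Hmx m.+2) *m Bvec m.+2 b) 0 0
      = \sum_(j < m.+1) (\sum_(i < m.+1) b i.+1 * Gr _ m.+2 i j) * b j.+1.
    rewrite mxE; apply: eq_bigr => j _; rewrite mxE; congr (_ * _).
      by apply: eq_bigr => i _; rewrite !mxE hentry_Gr ratr_Gr.
  by rewrite mxE.
  apply/matrixP => p q; rewrite !ord1 [LHS]mxE eqxx mulr1n [RHS]mxE E (quad _ m.+2 b) /=.
  rewrite -(transl _ m.+2 (x 1%N) (fun k => \sum_(i < m.+1) ((k - i)%N%:R : R[i]) * b i.+1)).
  have S1 : \sum_(k < m.+2) (x 1%N + \sum_(i < m.+1) ((k - i)%N%:R : R[i]) * b i.+1) ^+ 2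
     = \sum_(k < m.+2) x k.+1 ^+ 2 by apply: eq_bigr => k _; rewrite (zrel _ _ _ _ hb k (ltn_ord k)).
  have S2 : \sum_(k < m.+2) (x 1%N + \sum_(i < m.+1) ((k - i)%N%:R : R[i]) * b i.+1)
     = \sum_(k < m.+2) x k.+1 by apply: eq_bigr => k _; rewrite (zrel _ _ _ _ hb k (ltn_ord k)).
  rewrite S1 S2.
  have hP : \prod_(1 <= k < m.+3) ('X + (x k)%:P) = Pm _ (fun k => x k.+1) m.+2.
    by rewrite big_add1 big_mkord.
  have c1 : f`_m.+1 = f`_m.+2 * \sum_(k < m.+2) x k.+1.
    by rewrite {1}hfact hP coefZ Pm_e1.
  have c2 : 2 * f`_m = f`_m.+2 * ((\sum_(k < m.+2) x k.+1) ^+ 2 - \sum_(k < m.+2) x k.+1 ^+ 2).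
    by rewrite {1}hfact hP coefZ mulrCA Pm_e2.
  rewrite c1.
  set A := f`_m.+2; set S := \sum_(k < m.+2) x k.+1; set Q := \sum_(k < m.+2) x k.+1 ^+ 2.
  set P := f`_m.
  apply/eqP; rewrite -subr_eq0; apply/eqP.
  transitivity (- ((m.+2)`!%:R * m`!%:R * A) * (2 * P - A * (S ^+ 2 - Q))).
    rewrite !factS !natrM; ring.
  by rewrite c2 subrr mulr0.
move=> i j; rewrite (@Hmx_Gr m.+2 i j).
exists (\sum_(0 <= l < m.+2) \sum_(0 <= k < l)
          (((l - i) - (k - i)) * ((l - j) - (k - j))))%N.
split; last first.
  rewrite /Gr; apply: (lagr (fun k => (k - i)%N) (fun k => (k - j)%N)).
    by move=> k l hkl; apply: leq_sub2r.
  by move=> k l hkl; apply: leq_sub2r.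
rewrite big_nat_recr //= [X in (_ + X)%N]big_nat_recr //=.
have hi := ltn_ord i; have hj := ltn_ord j.
have -> : (m.+1 - i - (m - i) = 1)%N by lia.
have -> : (m.+1 - j - (m - j) = 1)%N by lia.
by rewrite muln1 addn1 addnS.
Qed.
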